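(* Let $Y$ be a finite poset with a unique maximal node, let $(S,M)$ be a reduced quasi-excellent local ring containing $\mathbb Q$ with $|S|=|S/M|=c$, and let $\Psi:Y\to\operatorname{Spec}(S)$ be a saturated embedding that is coheight-preserving along $\operatorname{Min}(S)$. Then $\dim(Y)=\dim(S)$.
   Context: $c$ is the cardinality of $\mathbb R$. $\dim$ of a poset = supremum of lengths of finite chains (length = number of elements minus one); $x^{\uparrow}_Y=\{z\in Y:x\le z\}$. A saturated embedding $f$ satisfies $x\le y\iff f(x)\le f(y)$ and $x<_cy\Rightarrow f(x)<_cf(y)$, where $x<_cy$ means $x<y$ with nothing strictly between. $\operatorname{Spec}(S)$ is ordered by inclusion. $\Psi$ is coheight-preserving along $\operatorname{Min}(S)$ if for every minimal prime $P$ of $S$ there is $x\in Y$ with $\Psi(x)=P$ and $\dim(S/P)=\dim(x^{\uparrow}_Y)$. *)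

(* Defs.v *)
From HB Require Import structures.
From mathcomp Require Import all_boot all_order all_algebra.
From Stdlib Require Rdefinitions.
Set Implicit Arguments. Unset Strict Implicit. Unset Printing Implicit Defensive.
Import Order.TTheory GRing.Theory.
Local Open Scope ring_scope.

Section Ideals.
Variable S : comNzRingType.

Definition subI (I J : S -> Prop) := forall x, I x -> J x.
Definition sameI (I J : S -> Prop) := forall x, I x <-> J x.

Definition ideal (I : S -> Prop) : Prop :=
  [/\ I 0, (forall x y, I x -> I y -> I (x + y)) &
      (forall a x, I x -> I (a * x))].

Definition proper_ideal (I : S -> Prop) := ideal I /\ ~ I 1.

Definition prime_ideal (P : S -> Prop) : Prop :=
  proper_ideal P /\ (forall a b, P (a * b) -> P a \/ P b).

Definition local_ring (M : S -> Prop) : Prop :=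
  proper_ideal M /\ (forall I, proper_ideal I -> subI I M).

Definition noetherian_ring : Prop :=
  forall I : nat -> S -> Prop, (forall n, ideal (I n)) ->
    (forall n, subI (I n) (I n.+1)) ->
    exists N, forall n, (N <= n)%N -> subI (I n) (I N).

Definition reduced_ring : Prop := forall (x : S) (n : nat), x ^+ n = 0 -> x = 0.

Definition contains_Q : Prop := inhabited {rmorphism rat -> S}.

Definition Spec := {P : S -> Prop | prime_ideal P}.
Definition spec_le (P Q : Spec) := subI (sval P) (sval Q).
Definition spec_lt (P Q : Spec) := spec_le P Q /\ ~ spec_le Q P.

Definition minimal_prime (P : Spec) : Prop := forall Q : Spec, ~ spec_lt Q P.
End Ideals.

Definition continuum := Rdefinitions.R.

Definition card_c (T : Type) : Prop :=
  exists f : T -> continuum, bijective f.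

(* |S/M| = c : the quotient S/M (classes of x ~ y iff x - y in M) is in
   bijection with the reals. *)
Definition residue_card_c (S : comNzRingType) (M : S -> Prop) : Prop :=
  exists f : S -> continuum,
    (forall r, exists x, f x = r) /\ (forall x y, f x = f y <-> M (x - y)).

(* A chain in A for the strict order lt: a sequence of elements of A, each
   strictly below the next. Its length is (number of elements) - 1. *)
Fixpoint chain_in (T : Type) (A : T -> Prop) (lt : T -> T -> Prop) (s : seq T)
  : Prop :=
  match s with
  | [::] => True
  | x :: s' =>
      A x /\ chain_in A lt s' /\
      (match s' with [::] => True | y :: _ => lt x y end)
  end.

Definition is_dim (T : Type) (A : T -> Prop) (lt : T -> T -> Prop) (d : nat)
  : Prop :=
  (exists s, chain_in A lt s /\ size s = d.+1) /\
  (forall s, chain_in A lt s -> (size s <= d.+1)%N).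

(* Equality of dimensions in N u {oo}: the two suprema agree
   (both infinite, or both equal to the same d). *)
Definition same_dim (T1 T2 : Type) (A1 : T1 -> Prop) (lt1 : T1 -> T1 -> Prop)
  (A2 : T2 -> Prop) (lt2 : T2 -> T2 -> Prop) : Prop :=
  forall d, is_dim A1 lt1 d <-> is_dim A2 lt2 d.

Section Posets.
Variables (disp : Order.disp_t) (Y : finPOrderType disp).

Definition maximal_node (m : Y) : Prop := forall z : Y, (m <= z)%O -> z = m.
Definition unique_maximal : Prop :=
  exists m, maximal_node m /\ forall m', maximal_node m' -> m' = m.

Definition up_set (x : Y) : Y -> Prop := fun z => (x <= z)%O.

Definition covers_Y (x y : Y) : Prop :=
  (x < y)%O /\ ~ (exists z, (x < z)%O /\ (z < y)%O).

Variable S : comNzRingType.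

Definition covers_spec (P Q : Spec S) : Prop :=
  spec_lt P Q /\ ~ (exists R, spec_lt P R /\ spec_lt R Q).

Definition saturated_embedding (Psi : Y -> Spec S) : Prop :=
  (forall x y : Y, (x <= y)%O <-> spec_le (Psi x) (Psi y)) /\
  (forall x y : Y, covers_Y x y -> covers_spec (Psi x) (Psi y)).

(* dim(S/P) = Krull dimension of S/P = dim of the poset of primes containing P *)
Definition coheight_preserving_min (Psi : Y -> Spec S) : Prop :=
  forall P : Spec S, minimal_prime P ->
    exists x : Y, sameI (sval (Psi x)) (sval P) /\
      same_dim (fun Q : Spec S => spec_le P Q) (@spec_lt S)
               (up_set x) (fun a b : Y => (a < b)%O).
End Posets.

(* Main.v *)
Require Import Defs.
From mathcomp Require Import all_boot all_order all_algebra.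
From mathcomp Require Import boolp classical_sets.
Set Implicit Arguments. Unset Strict Implicit. Unset Printing Implicit Defensive.
Import Order.TTheory.

Lemma chain_mono (T : Type) (A A' : T -> Prop) (lt : T -> T -> Prop) s :
  (forall a, A a -> A' a) -> chain_in A lt s -> chain_in A' lt s.
Proof.
move=> AA'; elim: s => //= x s IH [Ax [Cs H]]; split; first exact: AA'.
by split; [exact: IH|].
Qed.

Lemma chain_map (T T' : Type) (A : T -> Prop) (A' : T' -> Prop)
  (lt : T -> T -> Prop) (lt' : T' -> T' -> Prop) (f : T -> T') s :
  (forall a, A a -> A' (f a)) -> (forall a b, lt a b -> lt' (f a) (f b)) ->
  chain_in A lt s -> chain_in A' lt' (map f s).
Proof.
move=> HA Hl; elim: s => //= x s IH [Ax [Cs H]]; split; first exact: HA.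
split; first exact: IH.
by case: s H {IH Cs} => //= y s /Hl.
Qed.

Lemma chain_restrict (T : Type) (A B : T -> Prop) (lt : T -> T -> Prop) x s :
  (forall a b, lt a b -> B a -> B b) -> B x ->
  chain_in A lt (x :: s) -> chain_in B lt (x :: s).
Proof.
move=> HB; elim: s x => [|y s IH] x Bx /= [Ax [Cs H]]; first by [].
split=> //; split=> //; apply: IH => //; exact: HB H Bx.
Qed.

Lemma chain_sorted (T : eqType) (A : T -> Prop) (r : rel T) s :
  chain_in A r s -> sorted r s.
Proof.
elim: s => //= x s IH [_ [Cs H]]; move: (IH Cs).
by case: s H {IH Cs} => //= y s -> ->.
Qed.

Lemma exists_dim (T : Type) (A : T -> Prop) (lt : T -> T -> Prop) B :
  (exists s, chain_in A lt s /\ (0 < size s)%N) ->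
  (forall s, chain_in A lt s -> (size s <= B)%N) -> exists d, is_dim A lt d.
Proof.
move=> [s0 [C0 S0]] HB.
pose P n := `[< exists s, chain_in A lt s /\ size s = n.+1 >].
have exP : exists i, P i.
  exists (size s0).-1; apply/asboolP; exists s0; split => //.
  by rewrite prednK.
have ubP : forall i, P i -> (i <= B)%N.
  move=> i /asboolP [s [Cs Ss]]; apply: leq_trans (HB _ Cs); rewrite Ss; exact: leqnSn.
case: (ex_maxnP exP ubP) => d /asboolP [s [Cs Ss]] Hmax.
exists d; split; first by exists s.
move=> t Ct; case: t Ct => [|x t] Ct //=.
have : P (size t) by apply/asboolP; exists (x :: t).
by move=> /Hmax; rewrite /= ltnS.
Qed.

Lemma is_dim_uniq (T : Type) (A : T -> Prop) (lt : T -> T -> Prop) d1 d2 :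
  is_dim A lt d1 -> is_dim A lt d2 -> d1 = d2.
Proof.
move=> [[s1 [C1 S1]] H1] [[s2 [C2 S2]] H2].
have := H1 _ C2; have := H2 _ C1; rewrite S1 S2 !ltnS => a b.
by apply/eqP; rewrite eqn_leq a b.
Qed.

Section Y.
Variables (disp : Order.disp_t) (Y : finPOrderType disp).

Lemma chainY_size (A : Y -> Prop) s :
  chain_in A (fun a b : Y => (a < b)%O) s -> (size s <= #|Y|)%N.
Proof.
move=> /chain_sorted Hs.
have U : uniq s := sorted_uniq (@lt_trans _ Y) (@ltxx _ Y) Hs.
by rewrite -(card_uniqP U) max_card.
Qed.
End Y.

Section Min.
Variable S : comNzRingType.

Lemma exists_minimal_prime (Q0 : Spec S) :
  exists P : Spec S, minimal_prime P /\ spec_le P Q0.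
Proof.
pose T := {P : Spec S | spec_le P Q0}.
have t0 : T by exists Q0.
pose R (x y : T) := `[< spec_le (sval y) (sval x) >].
have [| | |t Ht] := @ZL_preorder T t0 R.
- by move=> t; apply/asboolP.
- move=> a b c /asboolP ab /asboolP bc; apply/asboolP => z /bc; exact: ab.
- move=> Ach Htot.
  have [[a0 Aa0]|Hne] := pselect (exists a, Ach a); last first.
    exists t0 => s As; exfalso; apply: Hne; by exists s.
  pose I : S -> Prop := fun z => forall a, Ach a -> sval (sval a) z.
  have PI : prime_ideal I.
    split; [split; [split|]|].
    + by move=> a _; case: (svalP (sval a)) => [[[? ? ?] _] _].
    + move=> x y Ix Iy a Aa; case: (svalP (sval a)) => [[[_ HD _] _] _].
      exact: HD (Ix a Aa) (Iy a Aa).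
    + move=> c x Ix a Aa; case: (svalP (sval a)) => [[[_ _ HM] _] _].
      exact: HM (Ix a Aa).
    + by move=> I1; case: (svalP (sval a0)) => [[_ H1] _]; apply: H1; apply: I1.
    + move=> x y Ixy.
      have [Ix|nIx] := pselect (I x); first by left.
      have [Iy|nIy] := pselect (I y); first by right.
      exfalso.
      move: nIx => /existsNP [a1 /not_implyP [A1 n1]].
      move: nIy => /existsNP [a2 /not_implyP [A2 n2]].
      have pr1 := (svalP (sval a1)).2; have pr2 := (svalP (sval a2)).2.
      case: (Htot _ _ A1 A2) => /asboolP H.
      * case: (pr2 _ _ (Ixy a2 A2)) => [/H //|//].
      * case: (pr1 _ _ (Ixy a1 A1)) => [//|/H //].
  have IQ : spec_le (exist _ I PI) Q0.
    by move=> z Iz; apply: (svalP a0); apply: Iz.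
  exists (exist _ (exist _ I PI) IQ) => s As; apply/asboolP => z Iz.
  exact: Iz.
- exists (sval t); split; last exact: (svalP t).
  move=> Q [QP nPQ]; apply: nPQ.
  have QQ0 : spec_le Q Q0 by move=> z /QP; apply: (svalP t).
  have /Ht /asboolP : R t (exist _ Q QQ0) by apply/asboolP.
  by [].
Qed.
End Min.

Theorem mainTheorem9 (disp : Order.disp_t) (Y : finPOrderType disp)
  (S : comNzRingType) (M : S -> Prop) (Psi : Y -> Spec S) :
  unique_maximal Y ->
  local_ring M -> noetherian_ring S -> reduced_ring S -> contains_Q S ->
  card_c S -> residue_card_c M ->
  saturated_embedding Psi -> coheight_preserving_min Psi ->
  same_dim (fun _ : Y => True) (fun a b : Y => (a < b)%O)
           (fun _ : Spec S => True) (@spec_lt S).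
Proof.
move=> [m [_ _]] _ _ _ _ _ _ [Hle _] Hcoh.
have [dY HdY] : exists d, is_dim (fun _ : Y => True) (fun a b : Y => (a < b)%O) d.
  apply: (@exists_dim _ _ _ #|Y|); last exact: chainY_size.
  by exists [:: m].
have HS : is_dim (fun _ : Spec S => True) (@spec_lt S) dY.
  split.
  - case: HdY => [[s [Cs Ss]] _]; exists (map Psi s); split; last by rewrite size_map.
    apply: chain_map Cs => // a b ab; split; first by apply/Hle/ltW.
    by move=> /Hle ba; move: (lt_le_trans ab ba); rewrite ltxx.
  - case=> [|Q0 s] Cs //.
    have [P [minP PQ]] := exists_minimal_prime Q0.
    have [x [_ Hsd]] := Hcoh P minP.
    have [d' Hd'] : exists d, is_dim (up_set x) (fun a b : Y => (a < b)%O) d.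
      apply: (@exists_dim _ _ _ #|Y|); last exact: chainY_size.
      by exists [:: x]; split => //=; split => //; rewrite /up_set.
    have HdS := (Hsd d').2 Hd'.
    have C' : chain_in (fun Q => spec_le P Q) (@spec_lt S) (Q0 :: s).
      apply: chain_restrict Cs => //.
      by move=> a b [ab _] Pa z /Pa /ab.
    have h1 := HdS.2 _ C'.
    have h2 : (d' <= dY)%N.
      case: Hd' => [[s' [Cs' Ss']] _].
      have := HdY.2 _ (chain_mono (A' := fun _ => True) (fun _ _ => I) Cs').
      by rewrite Ss' ltnS.
    by apply: leq_trans h1 _; rewrite ltnS.
move=> d; split => Hd.
- by rewrite (is_dim_uniq Hd HdY).
- by rewrite (is_dim_uniq Hd HS).
Qed.
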